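(* Let $\theta$ be an irrational real number. For integers $j\geq0$ and real $t>0$ define $$\tau_j(t)=-(-1)^j\,\frac{q_{j-1}-(-1)^j\frac{4i\pi t}{q_{j-2}+\theta_jq_{j-1}}}{q_j+(-1)^j\frac{4i\pi t}{q_{j-1}+\theta_{j+1}q_j}}.$$ Then for all $j\geq0$ and $t>0$, $$\bigl(\tau_j(t)-(-1)^ja_{j+1}\bigr)\,\tau_{j+1}(t)=-1.$$
   Context: Continued fraction notation for irrational $\theta$: $\theta_0=\theta$, $a_k=\lfloor\theta_k\rfloor$, $\theta_{k}=\frac{1}{\theta_{k-1}-a_{k-1}}$ for $k\geq1$. Denominators of convergents: $q_{-2}=1$, $q_{-1}=0$, $q_k=q_{k-2}+a_kq_{k-1}$ for $k\geq0$. *)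

(* Defs.v *)
From Stdlib Require Import Reals ZArith.
From Coquelicot Require Import Coquelicot.
Open Scope R_scope.

Definition cf_floor (x : R) : Z := Int_part x.

Fixpoint cf_theta (theta : R) (k : nat) : R :=
  match k with
  | O => theta
  | S k' => / (cf_theta theta k' - IZR (cf_floor (cf_theta theta k')))
  end.

Definition cf_a (theta : R) (k : nat) : R := IZR (cf_floor (cf_theta theta k)).

(* shifted denominators: cf_qs theta n = q_{n-2} *)
Fixpoint cf_qs (theta : R) (n : nat) : R :=
  match n with
  | O => 1
  | S O => 0
  | S ((S n'') as n') => cf_qs theta n'' + cf_a theta n'' * cf_qs theta n'
  end.

Definition cf_q (theta : R) (k : Z) : R := cf_qs theta (Z.to_nat (k + 2)).

Definition irrational (x : R) : Prop :=
  forall (p q : Z), q <> 0%Z -> x <> IZR p / IZR q.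

Definition tau (theta : R) (j : nat) (t : R) : C :=
  let s : C := RtoC ((-1) ^ j) in
  let z : C := (RtoC (4 * PI * t) * Ci)%C in
  let jz := Z.of_nat j in
  (- s * ((RtoC (cf_q theta (jz - 1))
            - s * z / RtoC (cf_q theta (jz - 2) + cf_theta theta j * cf_q theta (jz - 1)))
          / (RtoC (cf_q theta jz)
            + s * z / RtoC (cf_q theta (jz - 1) + cf_theta theta (S j) * cf_q theta jz))))%C.

(* Main.v *)
Require Import Defs.
From Stdlib Require Import Reals ZArith Lra Lia Psatz.
From Coquelicot Require Import Coquelicot.
Open Scope R_scope.

Lemma irr_step (x : R) : irrational x -> irrational (/ (x - IZR (cf_floor x))).
Proof.
  intros H p q Hq E.
  destruct (Z.eq_dec p 0) as [->|Hp].
  - assert (x - IZR (cf_floor x) <> 0).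
    { intro E2. apply (H (cf_floor x) 1%Z); [lia|]. rewrite Rdiv_1_r. lra. }
    unfold Rdiv in E. rewrite Rmult_0_l in E. apply Rinv_neq_0_compat in H0. lra.
  - apply (H (q + cf_floor x * p)%Z p Hp).
    assert (Hp' : IZR p <> 0) by (apply not_0_IZR; auto).
    assert (Hq' : IZR q <> 0) by (apply not_0_IZR; auto).
    assert (x - IZR (cf_floor x) = IZR q / IZR p).
    { rewrite <- (Rinv_inv (x - _)). rewrite E. field. auto. }
    rewrite plus_IZR, mult_IZR. set (f := IZR (cf_floor x)) in *.
    replace x with (x - f + f) by ring. rewrite H0. field. auto.
Qed.

Lemma th_irr theta : irrational theta -> forall k, irrational (cf_theta theta k).
Proof. intros H k; induction k; simpl; auto using irr_step. Qed.

Lemma frac_pos theta : irrational theta -> forall k, 0 < cf_theta theta k - cf_a theta k.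
Proof.
  intros H k. unfold cf_a, cf_floor. destruct (base_Int_part (cf_theta theta k)) as [H1 _].
  destruct (Req_dec (IZR (Int_part (cf_theta theta k))) (cf_theta theta k)) as [E|E].
  - exfalso. apply (th_irr theta H k (Int_part (cf_theta theta k)) 1%Z); [lia|]. rewrite Rdiv_1_r; auto.
  - lra.
Qed.

Definition Dr theta k := cf_qs theta k + cf_theta theta k * cf_qs theta (S k).

Lemma D_succ theta : irrational theta -> forall k, Dr theta (S k) = Dr theta k * cf_theta theta (S k).
Proof.
  intros H k. pose proof (frac_pos theta H k) as P.
  unfold Dr. change (cf_qs theta (S (S k))) with (cf_qs theta k + cf_a theta k * cf_qs theta (S k)).
  change (cf_theta theta (S k)) with (/ (cf_theta theta k - cf_a theta k)).
  field. lra.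
Qed.

Lemma D_pos theta : irrational theta -> forall k, 0 < Dr theta k.
Proof.
  intros H k; induction k.
  - unfold Dr; simpl. lra.
  - rewrite D_succ by auto. apply Rmult_lt_0_compat; auto.
    simpl. apply Rinv_0_lt_compat. apply (frac_pos theta H k).
Qed.
Lemma neq_ring (a b : C) : a = b -> b <> 0%C -> a <> 0%C.
Proof. intros ->; auto. Qed.
Lemma core (s : R) (Hs : s = 1 \/ s = -1) (Z Qm1 Q0 A Dj T : C) :
  Dj <> 0%C -> T <> 0%C -> (T - A <> 0)%C ->
  (Q0*(Dj*T) + RtoC s * Z <> 0)%C ->
  ((Qm1 + A*Q0)*(Dj*T) - RtoC s * Z * (T-A) <> 0)%C ->
  (((-RtoC s*((Qm1 - RtoC s*Z/Dj)/(Q0 + RtoC s*Z/(Dj*T)))) - RtoC s*A) *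
  (-(-RtoC s)*((Q0 - (-RtoC s)*Z/(Dj*T))/((Qm1 + A*Q0) + (-RtoC s)*Z/(Dj*T*/(T-A))))) = RtoC (-1))%C.
Proof.
  intros HD HT HTA H1 H2.
  destruct Hs as [-> | ->]; field; repeat split; auto; cbv beta.
  all: first [ eapply neq_ring; [|exact H2]; ring | eapply neq_ring; [|exact H1]; ring ].
Qed.

Lemma cq theta (z : Z) n : (z + 2)%Z = Z.of_nat n -> cf_q theta z = cf_qs theta n.
Proof. intros E. unfold cf_q. rewrite E, Nat2Z.id. reflexivity. Qed.

Theorem theorem6p1 (theta : R) (Hirr : irrational theta) (j : nat) (t : R) (ht : 0 < t) :
  ((tau theta j t - RtoC ((-1) ^ j * cf_a theta (S j))) * tau theta (S j) t = RtoC (-1))%C.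
Proof.
  unfold tau.
  rewrite (cq theta (Z.of_nat j - 1) (S j)) by lia.
  rewrite (cq theta (Z.of_nat j - 2) j) by lia.
  rewrite (cq theta (Z.of_nat j) (S (S j))) by lia.
  rewrite (cq theta (Z.of_nat (S j) - 1) (S (S j))) by lia.
  rewrite (cq theta (Z.of_nat (S j) - 2) (S j)) by lia.
  rewrite (cq theta (Z.of_nat (S j)) (S (S (S j)))) by lia.
  change (cf_qs theta j + cf_theta theta j * cf_qs theta (S j)) with (Dr theta j).
  change (cf_qs theta (S j) + cf_theta theta (S j) * cf_qs theta (S (S j))) with (Dr theta (S j)).
  change (cf_qs theta (S (S j)) + cf_theta theta (S (S j)) * cf_qs theta (S (S (S j)))) with (Dr theta (S (S j))).
  rewrite !D_succ by auto.
  change (cf_qs theta (S (S (S j)))) with (cf_qs theta (S j) + cf_a theta (S j) * cf_qs theta (S (S j))).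
  change (cf_theta theta (S (S j))) with (/ (cf_theta theta (S j) - cf_a theta (S j))).
  change ((-1) ^ (S j)) with (-1 * (-1) ^ j).
  assert (HD := D_pos theta Hirr j).
  assert (HT : 0 < cf_theta theta (S j)) by (simpl; apply Rinv_0_lt_compat, frac_pos, Hirr).
  assert (HTA := frac_pos theta Hirr (S j)).
  assert (HPI := PI_RGT_0).
  assert (Hs : (-1)^j = 1 \/ (-1)^j = -1).
  { destruct (Nat.Even_or_Odd j) as [[k ->]|[k ->]]; [left; apply pow_1_even | right; rewrite Nat.add_1_r; apply pow_1_odd]. }
  repeat rewrite ?RtoC_mult, ?RtoC_plus.
  rewrite (RtoC_inv (cf_theta theta (S j) - cf_a theta (S j))) by lra.
  rewrite ?RtoC_minus.
  destruct Hs as [Hs|Hs]; rewrite Hs; field; repeat split.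
  all: assert (P1 : 0 < PI * t) by nra.
  all: assert (P2 : 0 < PI * t * (cf_theta theta (S j) - cf_a theta (S j))) by nra.
  all: intro E; try (apply (f_equal Re) in E; unfold Cminus, Cplus, Copp, Cmult, RtoC, Ci in E; cbn [Re Im fst snd] in E; ring_simplify in E; nra); try (apply (f_equal Im) in E; unfold Cminus, Cplus, Copp, Cmult, RtoC, Ci in E; cbn [Re Im fst snd] in E; ring_simplify in E; nra).
Qed.
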